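(* Let $R=(\mathbb{C},\mathbb{C}^4,\mathbb{C};u_0,\dots,u_3,v_0,\dots,v_3)$ be a representation of $\mathbf{Q}$ with dimension vector $(1,4,1)$. If $R$ is globally injective, then $R$ is not locally surjective if and only if $R$ has a subrepresentation of dimension vector $(1,b,0)$ for some $b\in\{0,1,2,3,4\}$. If $R$ is globally surjective, then $R$ is not locally injective if and only if $R$ has a subrepresentation of dimension vector $(1,b,0)$ for some $b\in\{0,1,2,3,4\}$.
   Context: The quiver $\mathbf{Q}$ has vertices $-1,0,1$, arrows $\eta_0,\dots,\eta_3:-1\to0$, $\phi_0,\dots,\phi_3:0\to1$ and relations $\phi_i\eta_j+\phi_j\eta_i=0$; a representation consists of vector spaces $V_{-1},V_0,V_1$ and linear maps $u_i:V_{-1}\to V_0$, $v_i:V_0\to V_1$ with $v_iu_j+v_ju_i=0$. $R$ is globally injective (resp. surjective) if $\sum\lambda_iu_i$ is injective (resp. $\sum\lambda_iv_i$ is surjective) for all $\lambda\in\mathbb{C}^4\setminus\{0\}$; locally injective (resp. surjective) if this holds for all $[\lambda]\in\mathbb{P}^3$ outside a closed subset of codimension at least 2. *)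

(* Defs.v *)
From HB Require Import structures.
From mathcomp Require Import all_boot all_algebra.
From mathcomp Require Import complex Rstruct.
From mathcomp Require Import mpoly.
Set Implicit Arguments. Unset Strict Implicit. Unset Printing Implicit Defensive.
Import GRing.Theory Num.Theory.
Local Open Scope ring_scope.

Definition C : numClosedFieldType := complex Rdefinitions.R.

(* A point of P^3 is represented by a nonzero vector of C^4 (homogeneous
   coordinates); subsets of P^3 are predicates on C^4 considered only on
   nonzero vectors (all sets below are scaling-invariant by construction). *)
Definition pt := 'I_4 -> C.
Definition nonzero (x : pt) : Prop := exists i, x i != 0.
Definition pset := pt -> Prop.

Definition zclosed (Z : pset) : Prop :=
  exists S : {mpoly C[4]} -> Prop,
    (forall p, S p -> exists d : nat, p \is d.-homog) /\
    (forall x, nonzero x -> (Z x <-> forall p, S p -> p.@[x] = 0)).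

Definition psub (Y Z : pset) : Prop := forall x, nonzero x -> Y x -> Z x.
Definition pstrict (Y Z : pset) : Prop :=
  psub Y Z /\ exists x, nonzero x /\ Z x /\ ~ Y x.

Definition irreducible_closed (Y : pset) : Prop :=
  [/\ zclosed Y, (exists x, nonzero x /\ Y x) &
      forall A B, zclosed A -> zclosed B ->
        psub Y (fun x => A x \/ B x) -> psub Y A \/ psub Y B].

(* codimension of Y in P^3 is >= k : there is a strictly increasing chain
   Y = Y_0 < Y_1 < ... < Y_k of irreducible closed subsets of P^3 *)
Definition irr_codim_ge (k : nat) (Y : pset) : Prop :=
  exists c : nat -> pset,
    [/\ psub Y (c 0%N), psub (c 0%N) Y,
        (forall i, (i <= k)%N -> irreducible_closed (c i)) &
        (forall i, (i < k)%N -> pstrict (c i) (c i.+1))].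

(* A closed set Z has codimension >= k iff every irreducible component
   (equivalently every irreducible closed subset) of Z has codim >= k. *)
Definition codim_ge (k : nat) (Z : pset) : Prop :=
  forall Y, irreducible_closed Y -> psub Y Z -> irr_codim_ge k Y.

(* Vector spaces V_{-1} = C^nm, V_0 = C^n0, V_1 = C^n1, linear maps written
   in row-vector convention: u_i : w |-> w *m u i, v_i : w |-> w *m v i.
   Hence the composite v_i u_j is the matrix u j *m v i. *)
Definition is_rep (nm n0 n1 : nat)
  (u : 'I_4 -> 'M[C]_(nm, n0)) (v : 'I_4 -> 'M[C]_(n0, n1)) : Prop :=
  forall i j : 'I_4, u j *m v i + u i *m v j = 0.

Definition lincomb (m n : nat) (x : pt) (f : 'I_4 -> 'M[C]_(m, n)) : 'M[C]_(m, n) :=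
  \sum_(i < 4) x i *: f i.

Definition injective_at (nm n0 : nat) (u : 'I_4 -> 'M[C]_(nm, n0)) (x : pt) : Prop :=
  injective (fun w : 'rV[C]_nm => w *m lincomb x u).

Definition surjective_at (n0 n1 : nat) (v : 'I_4 -> 'M[C]_(n0, n1)) (x : pt) : Prop :=
  forall y : 'rV[C]_n1, exists w : 'rV[C]_n0, w *m lincomb x v = y.

Definition globally_injective nm n0 (u : 'I_4 -> 'M[C]_(nm, n0)) : Prop :=
  forall x, nonzero x -> injective_at u x.
Definition globally_surjective n0 n1 (v : 'I_4 -> 'M[C]_(n0, n1)) : Prop :=
  forall x, nonzero x -> surjective_at v x.

Definition locally_injective nm n0 (u : 'I_4 -> 'M[C]_(nm, n0)) : Prop :=
  exists Z, [/\ zclosed Z, codim_ge 2 Z &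
                forall x, nonzero x -> ~ Z x -> injective_at u x].
Definition locally_surjective n0 n1 (v : 'I_4 -> 'M[C]_(n0, n1)) : Prop :=
  exists Z, [/\ zclosed Z, codim_ge 2 Z &
                forall x, nonzero x -> ~ Z x -> surjective_at v x].

Definition has_subrep nm n0 n1
  (u : 'I_4 -> 'M[C]_(nm, n0)) (v : 'I_4 -> 'M[C]_(n0, n1)) (a b c : nat) : Prop :=
  exists (Wm : 'M[C]_nm) (W0 : 'M[C]_n0) (W1 : 'M[C]_n1),
    [/\ \rank Wm = a, \rank W0 = b, \rank W1 = c,
        (forall i, (Wm *m u i <= W0)%MS) &
        (forall i, (W0 *m v i <= W1)%MS)].

(* Main.v *)
Require Import Defs.
From HB Require Import structures.
From mathcomp Require Import all_boot all_algebra.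
From mathcomp Require Import complex Rstruct mpoly.
From Stdlib Require Import Classical.
Set Implicit Arguments. Unset Strict Implicit. Unset Printing Implicit Defensive.
Import GRing.Theory Num.Theory.
Local Open Scope ring_scope.

Lemma line_poly (p : {mpoly C[4]}) (a d : pt) :
  exists g : {poly C}, forall t, g.[t] = p.@[fun i => a i + t * d i].
Proof.
exists (\sum_(m <- msupp p) (p@_m)%:P * \prod_(i < 4) ((a i)%:P + 'X * (d i)%:P) ^+ m i).
move=> t; rewrite mevalE horner_sum; apply: eq_bigr => m _.
rewrite hornerM hornerC horner_prod; congr (_ * _); apply: eq_bigr => i _.
by rewrite horner_exp hornerD hornerC hornerM hornerX hornerC.
Qed.

Lemma poly_all0 (g : {poly C}) : (forall t, g.[t] = 0) -> g = 0.
Proof.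
move=> H; apply/eqP; apply/negPn/negP => gn0.
set rs := [seq (i%:R : C) | i <- iota 0 (size g)].
have r1 : all (root g) rs by apply/allP => x /mapP [i _ ->]; rewrite /root H.
have r2 : uniq rs.
  rewrite map_inj_uniq ?iota_uniq // => i j /eqP.
  by rewrite eqr_nat => /eqP.
have := max_poly_roots gn0 r1 r2.
by rewrite size_map size_iota ltnn.
Qed.

Lemma homog_lin (c : 'I_4 -> C) : (\sum_(i < 4) c i *: 'X_i : {mpoly C[4]}) \is 1.-homog.
Proof.
apply: (big_ind (fun q : {mpoly C[4]} => q \is 1.-homog)).
- exact: dhomog0.
- by move=> x y; apply: dhomogD.
- by move=> i _; apply: dhomogZ; rewrite dhomogX; apply/eqP; exact: mdeg1.
Qed.

Lemma eval_lin (c : 'I_4 -> C) (x : pt) :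
  (\sum_(i < 4) c i *: 'X_i : {mpoly C[4]}).@[x] = \sum_(i < 4) c i * x i.
Proof.
rewrite (big_morph _ (mevalD x) (meval0 x)); apply: eq_bigr => i _.
by rewrite mevalZ mevalXU.
Qed.

Lemma not_closed_wit (A : pset) S a : nonzero a ->
  (forall x, nonzero x -> (A x <-> forall p, S p -> p.@[x] = 0)) -> ~ A a ->
  exists p : {mpoly C[4]}, S p /\ p.@[a] != 0.
Proof.
move=> nza hA nAa; apply: NNPP => nE; apply: nAa; apply/hA => // p Sp.
apply: NNPP => np; apply: nE; exists p; split => //; exact/eqP.
Qed.

Lemma irr_lin (W : pset) : zclosed W -> (exists x, nonzero x /\ W x) ->
  (forall a b t, W a -> W b -> W (fun i => a i + t * (b i - a i))) ->
  irreducible_closed W.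
Proof.
move=> cW neW lin; split => // A B [SA [_ hA]] [SB [_ hB]] sub.
case: (classic (psub W A)) => [|nA]; [by left | right].
have [a [nza [Wa nAa]]] : exists a, nonzero a /\ W a /\ ~ A a.
  apply: NNPP => nE; apply: nA => x nzx Wx; apply: NNPP => nAx.
  by apply: nE; exists x.
move=> b nzb Wb; apply: NNPP => nBb.
have [p [Sp pa]] := not_closed_wit nza hA nAa.
have [q [Sq qb]] := not_closed_wit nzb hB nBb.
have [k ak] := nza.
have [g Hg] := line_poly p a (fun i => b i - a i).
have [h Hh] := line_poly q a (fun i => b i - a i).
pose r : {poly C} := (a k)%:P + 'X * (b k - a k)%:P.
have Hr t : r.[t] = a k + t * (b k - a k).
  by rewrite hornerD hornerC hornerM hornerX hornerC.
have H0 : g * h * r = 0.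
  apply: poly_all0 => t; rewrite !hornerM Hg Hh Hr.
  case: (classic (nonzero (fun i => a i + t * (b i - a i)))) => [nz|z].
    case: (sub _ nz (lin a b t Wa Wb)) => [Ac|Bc].
      by rewrite ((proj1 (hA _ nz)) Ac p Sp) !mul0r.
    by rewrite ((proj1 (hB _ nz)) Bc q Sq) mulr0 mul0r.
  have -> : a k + t * (b k - a k) = 0.
    by apply: NNPP => nz; apply: z; exists k; apply/eqP.
  by rewrite mulr0.
move/eqP: H0; rewrite !mulf_eq0 => /orP [/orP [/eqP g0|/eqP h0]|/eqP r0].
- move: pa; have := Hg 0; rewrite g0 horner0 => e.
  by rewrite (@meval_eq _ _ _ (fun i => a i + 0 * (b i - a i))) -?e ?eqxx // => i; rewrite mul0r addr0.
- move: qb; have := Hh 1; rewrite h0 horner0 => e.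
  by rewrite (@meval_eq _ _ _ (fun i => a i + 1 * (b i - a i))) -?e ?eqxx // => i; rewrite mul1r addrC subrK.
- by move: ak; have := Hr 0; rewrite r0 horner0 mul0r addr0 => <-; rewrite eqxx.
Qed.

Definition delta (i : 'I_4) : pt := fun k => (k == i)%:R.

Lemma nonzero_delta i : nonzero (delta i).
Proof. by exists i; rewrite /delta eqxx oner_eq0. Qed.

Lemma sum_delta (c : 'I_4 -> C) i : \sum_(k < 4) c k * delta i k = c i.
Proof.
rewrite (bigD1 i) //= /delta eqxx mulr1 big1 ?addr0 // => k /negbTE ->.
by rewrite mulr0.
Qed.

Lemma irr_all : irreducible_closed (fun _ => True).
Proof.
apply: irr_lin => //.
- exists (fun _ => False); split => // x _; split => // _ p [].
- by exists (delta 0); split => //; exact: nonzero_delta.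
Qed.

Definition hyp (c : 'I_4 -> C) : pset := fun x => \sum_(k < 4) c k * x k = 0.

Lemma irr_hyp (c : 'I_4 -> C) f : nonzero f -> hyp c f -> irreducible_closed (hyp c).
Proof.
move=> nzf hf; apply: irr_lin.
- exists (fun p => p = \sum_(i < 4) c i *: 'X_i); split.
    by move=> p ->; exists 1%N; exact: homog_lin.
  move=> x _; split; first by move=> hx p ->; rewrite eval_lin.
  by move=> H; rewrite /hyp -eval_lin; apply: H.
- by exists f.
- move=> a b t; rewrite /hyp => ha hb.
  have -> : \sum_(k < 4) c k * (a k + t * (b k - a k)) =
     \sum_(k < 4) c k * a k + t * (\sum_(k < 4) c k * b k - \sum_(k < 4) c k * a k).
    rewrite -sumrB mulr_sumr -big_split /=; apply: eq_bigr => k _.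
    by rewrite mulrDr mulrBr !mulrBr !mulrA [c k * t]mulrC.
  by rewrite ha hb subrr mulr0 addr0.
Qed.

Lemma notlocal (P : pt -> Prop) : (forall x, nonzero x -> ~ P x) ->
  ~ exists Z, [/\ zclosed Z, codim_ge 2 Z & forall x, nonzero x -> ~ Z x -> P x].
Proof.
move=> nP [Z [cZ cd hZ]].
have sub : psub (fun _ => True) Z.
  move=> x nzx _; apply: NNPP => nZ; exact: (nP x nzx (hZ x nzx nZ)).
have [c [s0 _ _ st]] := cd _ irr_all sub.
have [_ [x [nzx [_ n0]]]] := st 0%N isT.
by apply: n0; apply: s0.
Qed.

Lemma local (Z : pset) (c : 'I_4 -> C) e f : nonzero e -> nonzero f ->
  ~ hyp c e -> hyp c f -> ~ Z f -> psub Z (hyp c) -> codim_ge 2 Z.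
Proof.
move=> nze nzf he hf nZf sZ Y irrY sYZ.
exists (fun i => match i with 0%N => Y | 1%N => hyp c | _ => (fun _ => True) end).
split => //.
- case=> [|[|[|i]]] // _; [exact: irr_hyp hf | exact: irr_all].
- case=> [|[|i]] // _; split.
  + by move=> x nzx /(sYZ _ nzx); apply: sZ.
  + by exists f; split => //; split => // /(sYZ _ nzf).
  + by [].
  + by exists e.
Qed.

Lemma lincomb_entry m n x (g : 'I_4 -> 'M[C]_(m, n)) r s :
  (lincomb x g) r s = \sum_(k < 4) g k r s * x k.
Proof. by rewrite /lincomb summxE; apply: eq_bigr => k _; rewrite mxE mulrC. Qed.

Lemma zclosed_lc m n (g : 'I_4 -> 'M[C]_(m, n)) : zclosed (fun x => lincomb x g = 0).
Proof.
exists (fun p => exists r s, p = \sum_(k < 4) g k r s *: 'X_k); split.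
  by move=> p [r [s ->]]; exists 1%N; exact: homog_lin.
move=> x _; split.
  by move=> H p [r [s ->]]; rewrite eval_lin -lincomb_entry H mxE.
move=> H; apply/matrixP => r s; rewrite lincomb_entry mxE -eval_lin.
by apply: H; exists r, s.
Qed.

Lemma rows_inj (r : 'I_4 -> 'rV[C]_4) : (forall x, nonzero x -> lincomb x r != 0) ->
  forall col : 'cV[C]_4, (forall j, r j *m col = 0) -> col = 0.
Proof.
move=> hr col hc.
pose U := \matrix_(j, k) r j 0 k.
have rowU j : row j U = r j by apply/rowP => k; rewrite !mxE.
have kerU (w : 'rV_4) : w *m U = 0 -> w = 0.
  move=> hw; case: (classic (nonzero (fun j => w 0 j))) => [nz|z].
    have := hr _ nz; rewrite /lincomb.
    have <- : w *m U = \sum_(i < 4) w 0 i *: r i.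
      by rewrite mulmx_sum_row; apply: eq_bigr => i _; rewrite rowU.
    by rewrite hw eqxx.
  apply/rowP => k; rewrite mxE; apply: NNPP => nk; apply: z; exists k; exact/eqP.
have uU : U \in unitmx.
  rewrite -row_free_unit -kermx_eq0; apply/eqP/row_matrixP => i.
  rewrite row0; apply: kerU; apply/sub_kermxP; exact: row_sub.
have UC : U *m col = 0.
  by apply/row_matrixP => j; rewrite row_mul rowU hc row0.
by rewrite -(mulKmx uU col) UC mulmx0.
Qed.

Lemma inj1 n0 (u : 'I_4 -> 'M[C]_(1, n0)) x : injective_at u x <-> lincomb x u != 0.
Proof.
split.
  move=> hi; apply/eqP => h0.
  have : (1 : 'rV[C]_1) = 0 by apply: hi; rewrite /= h0 !mulmx0.
  by move/matrixP => /(_ 0 0); rewrite !mxE /= => /eqP; rewrite oner_eq0.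
move=> nz w w' /= e.
have : (w - w') *m lincomb x u = 0 by rewrite mulmxBl e subrr.
rewrite [w - w']mx11_scalar mul_scalar_mx => /eqP; rewrite scaler_eq0 (negbTE nz) orbF.
move=> /eqP h; apply/matrixP => i j; rewrite !ord1; apply/eqP.
by rewrite -subr_eq0; move: h; rewrite !mxE => ->.
Qed.

Lemma surj1 n0 (v : 'I_4 -> 'M[C]_(n0, 1)) x : surjective_at v x <-> lincomb x v != 0.
Proof.
split.
  move=> hs; apply/eqP => h0; have [w] := hs 1.
  rewrite h0 mulmx0 => /matrixP /(_ 0 0); rewrite !mxE /= => /eqP.
  by rewrite eq_sym oner_eq0.
move=> nz y.
have [k hk] : exists k, lincomb x v k 0 != 0.
  apply: NNPP => nE; move: nz; rewrite -[_ != 0]/(~~ _); apply/negP; rewrite negbK.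
  apply/eqP/matrixP => i j; rewrite ord1 mxE; apply: NNPP => ne; apply: nE.
  by exists i; apply/eqP.
exists ((y 0 0 / lincomb x v k 0) *: delta_mx 0 k).
rewrite -scalemxAl -rowE; apply/matrixP => i j; rewrite !ord1 !mxE.
by rewrite divfK.
Qed.

Lemma mx11_neq (M : 'M[C]_1) : M != 0 -> M 0 0 != 0.
Proof.
move=> nz; apply: contraNneq nz => h.
by rewrite [M]mx11_scalar h raddf0.
Qed.

Lemma lincomb_delta m n (g : 'I_4 -> 'M[C]_(m, n)) i : lincomb (delta i) g = g i.
Proof.
apply/matrixP => r s; rewrite lincomb_entry.
by rewrite (bigD1 i) //= /delta eqxx mulr1 big1 ?addr0 // => k /negbTE ->; rewrite mulr0.
Qed.

Lemma lincomb_mull m n p (A : 'M[C]_(m, n)) (g : 'I_4 -> 'M[C]_(n, p)) x :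
  A *m lincomb x g = lincomb x (fun k => A *m g k).
Proof.
rewrite /lincomb mulmx_sumr; apply: eq_bigr => k _; by rewrite scalemxAr.
Qed.

Lemma lincomb_mulr m n p (A : 'M[C]_(n, p)) (g : 'I_4 -> 'M[C]_(m, n)) x :
  lincomb x g *m A = lincomb x (fun k => g k *m A).
Proof.
rewrite /lincomb mulmx_suml; apply: eq_bigr => k _; by rewrite scalemxAl.
Qed.

Lemma lincomb_tr m n (g : 'I_4 -> 'M[C]_(m, n)) x :
  lincomb x (fun k => (g k)^T) = (lincomb x g)^T.
Proof.
by apply/matrixP => a b; rewrite [RHS]mxE !lincomb_entry; apply: eq_bigr => k _; rewrite mxE.
Qed.

Lemma lincomb_zero m n (g : 'I_4 -> 'M[C]_(m, n)) x : (forall k, g k = 0) -> lincomb x g = 0.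
Proof. by move=> h; rewrite /lincomb big1 // => k _; rewrite h scaler0. Qed.

Section Rep.
Variables (u : 'I_4 -> 'M[C]_(1, 4)) (v : 'I_4 -> 'M[C]_(4, 1)).
Hypothesis hr : is_rep u v.

Lemma rep_anti i j : u i *m v j = 0 -> u j *m v i = 0.
Proof. by move=> h; have := hr i j; rewrite h addr0. Qed.

Lemma diag0 j : u j *m v j = 0.
Proof.
have := hr j j; set M := u j *m v j => h.
apply/matrixP => a b; rewrite !ord1 [X in _ = X]mxE.
have : (M + M) 0 0 = 0 by rewrite h mxE.
by rewrite mxE -mulr2n => /eqP; rewrite mulrn_eq0 /= => /eqP.
Qed.

Lemma subrep_prod b : has_subrep u v 1 b 0 -> forall i j, u j *m v i = 0.
Proof.
move=> [Wm [W0 [W1 [rm r0 r1 hu hv]]]] i j.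
have W10 : W1 = 0 by apply/eqP; rewrite -mxrank_eq0 r1.
have hv0 : W0 *m v i = 0 by apply/eqP; rewrite -submx0 -W10 hv.
have nzm : Wm 0 0 != 0 by apply: mx11_neq; rewrite -mxrank_eq0 rm.
have uj : (u j <= W0)%MS.
  have e : u j = (Wm 0 0)^-1 *: (Wm *m u j).
    have eW : Wm *m u j = Wm 0 0 *: u j by rewrite {1}[Wm]mx11_scalar mul_scalar_mx.
    by rewrite eW scalerA mulVf // scale1r.
  by rewrite e scalemx_sub.
have [D ->] := submxP uj.
by rewrite -mulmxA hv0 mulmx0.
Qed.

Lemma case_GI : globally_injective u ->
  (~ locally_surjective v <-> exists b : nat, (b <= 4)%N /\ has_subrep u v 1 b 0).
Proof.
move=> gi.
have hu : forall x, nonzero x -> lincomb x u != 0 by move=> x nz; apply/inj1/gi.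
have vz : forall i, (forall j, u j *m v i = 0) -> v i = 0 := fun i => @rows_inj u hu (v i).
have -> : (exists b : nat, (b <= 4)%N /\ has_subrep u v 1 b 0) <-> forall i, v i = 0.
  split.
    by move=> [b [_ hs]] i; apply: vz => j; exact: subrep_prod hs i j.
  move=> h0; exists 4%N; split => //; exists 1%:M, 1%:M, 0; split.
  - exact: mxrank1.
  - exact: mxrank1.
  - exact: mxrank0.
  - by move=> i; exact: submx1.
  - by move=> i; rewrite h0 mulmx0; apply: sub0mx.
split.
- move=> nls i; apply: NNPP => nvi; apply: nls.
  have [j hj] : exists j, u j *m v i != 0.
    apply: NNPP => nE; apply: nvi; apply: vz => j; apply: NNPP => ne; apply: nE.
    by exists j; apply/eqP.
  exists (fun x => lincomb x v = 0); split.
  + exact: zclosed_lc.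
  + apply: (@local _ (fun k => (u j *m v k) 0 0) (delta i) (delta j)).
    * exact: nonzero_delta.
    * exact: nonzero_delta.
    * by rewrite /hyp sum_delta; apply/eqP; exact: mx11_neq.
    * by rewrite /hyp sum_delta diag0 mxE.
    * rewrite lincomb_delta => vj0; move/eqP: hj; apply; apply: rep_anti.
      by rewrite vj0 mulmx0.
    * move=> x _ hx; rewrite /hyp.
      by rewrite -(lincomb_entry x (fun k => u j *m v k)) -lincomb_mull hx mulmx0 mxE.
  + by move=> x nz nZ; apply/surj1; apply/eqP.
- move=> h0; apply: (@notlocal (surjective_at v)) => x _ /surj1.
  by rewrite lincomb_zero // eqxx.
Qed.

Lemma case_GS : globally_surjective v ->
  (~ locally_injective u <-> exists b : nat, (b <= 4)%N /\ has_subrep u v 1 b 0).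
Proof.
move=> gs.
have hv : forall x, nonzero x -> lincomb x (fun k => (v k)^T) != 0.
  move=> x nz; rewrite lincomb_tr; have := (surj1 v x).1 (gs x nz).
  by apply: contraNneq => e; rewrite -[lincomb x v]trmxK e trmx0.
have uz : forall j, (forall i, u j *m v i = 0) -> u j = 0.
  move=> j h; rewrite -[u j]trmxK (@rows_inj _ hv (u j)^T) ?trmx0 // => i.
  by rewrite -trmx_mul h trmx0.
have -> : (exists b : nat, (b <= 4)%N /\ has_subrep u v 1 b 0) <-> forall j, u j = 0.
  split.
    by move=> [b [_ hs]] j; apply: uz => i; exact: subrep_prod hs i j.
  move=> h0; exists 0%N; split => //; exists 1%:M, 0, 0; split.
  - exact: mxrank1.
  - exact: mxrank0.
  - exact: mxrank0.
  - by move=> i; rewrite h0 mulmx0; apply: sub0mx.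
  - by move=> i; rewrite mul0mx; apply: sub0mx.
split.
- move=> nli j; apply: NNPP => nuj; apply: nli.
  have [i hi] : exists i, u j *m v i != 0.
    apply: NNPP => nE; apply: nuj; apply: uz => i; apply: NNPP => ne; apply: nE.
    by exists i; apply/eqP.
  exists (fun x => lincomb x u = 0); split.
  + exact: zclosed_lc.
  + apply: (@local _ (fun k => (u k *m v i) 0 0) (delta j) (delta i)).
    * exact: nonzero_delta.
    * exact: nonzero_delta.
    * by rewrite /hyp sum_delta; apply/eqP; exact: mx11_neq.
    * by rewrite /hyp sum_delta diag0 mxE.
    * rewrite lincomb_delta => ui0; move/eqP: hi; apply; apply: rep_anti.
      by rewrite ui0 mul0mx.
    * move=> x _ hx; rewrite /hyp.
      by rewrite -(lincomb_entry x (fun k => u k *m v i)) -lincomb_mulr hx mul0mx mxE.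
  + by move=> x nz nZ; apply/inj1; apply/eqP.
- move=> h0; apply: (@notlocal (injective_at u)) => x _ /inj1.
  by rewrite lincomb_zero // eqxx.
Qed.

End Rep.

Theorem mainTheorem9 (u : 'I_4 -> 'M[C]_(1, 4)) (v : 'I_4 -> 'M[C]_(4, 1)) :
  is_rep u v ->
  (globally_injective u ->
     (~ locally_surjective v <-> exists b : nat, (b <= 4)%N /\ has_subrep u v 1 b 0)) /\
  (globally_surjective v ->
     (~ locally_injective u <-> exists b : nat, (b <= 4)%N /\ has_subrep u v 1 b 0)).
Proof. by move=> hr; split; [exact: case_GI | exact: case_GS]. Qed.
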